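(* Let $G$ be a graph with $n$ vertices. If $\mathrm{Deg}\,H(G,x)\ge n$, then $G$ contains a triangle (i.e. its girth is $3$). Furthermore, if $G$ is triangle-free and $\mathrm{Deg}\,H(G,x)=n-1$, then $G$ is connected and has diameter at most $3$.
   Context: All graphs are finite, simple and have no isolated vertices; $d_u$ is the degree of $u$. The harmonic polynomial is $H(G,x)=\sum_{uv\in E(G)}x^{d_u+d_v-1}$, and $\mathrm{Deg}\,p(x)$ denotes the degree of a polynomial $p$. The girth is the minimum length of a cycle. *)

(* Defs.v *)
From mathcomp Require Import all_boot all_order all_algebra.
Set Implicit Arguments. Unset Strict Implicit. Unset Printing Implicit Defensive.
Import GRing.Theory.

Definition simple_graph (T : finType) (e : rel T) : Prop :=
  symmetric e /\ irreflexive e.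

Definition no_isolated (T : finType) (e : rel T) : Prop :=
  forall u : T, exists v : T, e u v.

Definition gdeg (T : finType) (e : rel T) (u : T) : nat := #|[set v | e u v]|.

Definition gedges (T : finType) (e : rel T) : {set {set T}} :=
  [set E : {set T} | [exists u, exists v, e u v && (E == [set u; v])]].

Definition harmonic_poly (T : finType) (e : rel T) : {poly int} :=
  (\sum_(E in gedges e) 'X^((\sum_(x in E) gdeg e x).-1))%R.

Definition Deg (R : nzRingType) (p : {poly R}) : nat := (size p).-1.

Definition has_triangle (T : finType) (e : rel T) : Prop :=
  exists u v w : T, [&& e u v, e v w & e w u].

Definition gconnected (T : finType) (e : rel T) : Prop :=
  forall u v : T, connect e u v.

Definition diam_le (T : finType) (e : rel T) (k : nat) : Prop :=
  forall u v : T, exists p : seq T,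
    [&& path e u p, last u p == v & size p <= k].

(* Main.v *)
Require Import Defs.
From mathcomp Require Import all_boot all_order all_algebra zify.
Import GRing.Theory Num.Theory.

Section H.
Variables (T : finType) (e : rel T).
Hypothesis Hs : simple_graph e.

Lemma edge_sum u v : e u v ->
  \sum_(x in [set u; v]) gdeg e x = gdeg e u + gdeg e v.
Proof.
move=> euv; have uv : u != v.
  by apply/eqP=> E; case: Hs => _ /(_ u); rewrite {2}E euv.
by rewrite big_setU1 /= ?big_set1 // in_set1.
Qed.

Lemma coef_harm k :
  ((harmonic_poly e)`_k)%R =
  (\sum_(E in gedges e) ((k == (\sum_(x in E) gdeg e x).-1)%:R : int))%R.
Proof. by rewrite /harmonic_poly coef_sum; apply: eq_bigr => E _; rewrite coefXn. Qed.

Lemma harm_edge : (exists u v, e u v) ->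
  exists u v, e u v /\ Deg (harmonic_poly e) = (gdeg e u + gdeg e v).-1.
Proof.
move=> [u0 [v0 e0]].
set p := harmonic_poly e.
have E0 : [set u0; v0] \in gedges e.
  by rewrite inE; apply/existsP; exists u0; apply/existsP; exists v0; rewrite e0 eqxx.
have pn0 : p != 0%R.
  apply/eqP=> p0.
  have := coef_harm (gdeg e u0 + gdeg e v0).-1.
  rewrite -/p p0 coef0 (bigD1 _ E0) /= edge_sum // eqxx => /eqP.
  rewrite eq_sym paddr_eq0 ?oner_eq0 //; apply: sumr_ge0 => i _; exact: ler0n.
have : (p`_(Deg p) != 0)%R by rewrite /Deg -lead_coefE lead_coef_eq0.
rewrite coef_harm => Hnz.
have : [exists E in gedges e, Deg p == (\sum_(x in E) gdeg e x).-1].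
  apply: contraNT Hnz => /existsPn H; apply/eqP; rewrite big1 // => E EE.
  by have := H E; rewrite EE /= => /negbTE ->.
case/existsP => E /andP [EE /eqP EQ]; move: EE.
rewrite inE => /existsP [u /existsP [v /andP [euv /eqP EU]]].
by exists u, v; split => //; rewrite EQ EU edge_sum.
Qed.
End H.

Theorem theorem11 (T : finType) (e : rel T) :
  simple_graph e -> no_isolated e -> 0 < #|T| ->
  (#|T| <= Deg (harmonic_poly e) -> has_triangle e) /\
  (~ has_triangle e -> Deg (harmonic_poly e) = #|T|.-1 ->
     gconnected e /\ diam_le e 3).
Proof.
move=> Hs Hn Tn.
have [sym irr] := Hs.
have [x0 _] : exists x : T, true by case/card_gt0P: Tn => x; exists x.
have [u [v [euv HD]]] := @harm_edge T e Hs (ex_intro _ x0 (Hn x0)).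
set N := fun w => [set y | e w y].
have card : #|N u :|: N v| + #|N u :&: N v| = gdeg e u + gdeg e v := cardsUI _ _.
have mc : #|N u :|: N v| <= #|T| := max_card _.
have tri : (0 < #|N u :&: N v|) -> has_triangle e.
  case/card_gt0P => w; rewrite !inE => /andP [euw evw].
  exists u, v, w; by rewrite euv evw sym euw.
have du : 0 < gdeg e u by apply/card_gt0P; exists v; rewrite inE.
split.
  move=> Hle; apply: tri; rewrite HD in Hle; move: card mc Hle; clearbody N; lia.
move=> ntri HD2.
have I0 : #|N u :&: N v| = 0.
  by case: (posnP #|N u :&: N v|) => // /tri.
have E : gdeg e u + gdeg e v = #|T| by move: du Tn HD2; rewrite HD; lia.
have U : N u :|: N v = setT.
  apply/eqP; rewrite eqEcard subsetT cardsT /=.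
  by rewrite -E -card I0 addn0.
have adj : forall w, e u w || e v w.
  move=> w; have : w \in N u :|: N v by rewrite U inE.
  by rewrite !inE.
have D : diam_le e 3.
  move=> x y.
  have evu : e v u by rewrite sym.
  case/orP: (adj x) => ex; case/orP: (adj y) => ey.
  - by exists [:: u; y]; rewrite /= ey (sym x u) ex eqxx.
  - by exists [:: u; v; y]; rewrite /= ey euv (sym x u) ex eqxx.
  - by exists [:: v; u; y]; rewrite /= ey evu (sym x v) ex eqxx.
  - by exists [:: v; y]; rewrite /= ey (sym x v) ex eqxx.
split => // x y; have [p /and3P [pp /eqP lp _]] := D x y.
by apply/connectP; exists p.
Qed.
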